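(* Let $K$ be a compact Hausdorff space without isolated points and let $U$ be a nonempty open subset of $Q_K$. Then there is a nonempty open set $V\subset K$ such that for every $v\in V$ there exists an ultrafilter $\mathfrak U_v$ on $K$ containing no first category set, with $\lim\mathfrak U_v=v$ and $\mathfrak U_v\text{-}\lim\in U$.
   Context: For a compact Hausdorff space $K$ without isolated points: $\ell_\infty(K)$ is the space of bounded real functions on $K$ with the sup norm; $m(K)=\{f\in\ell_\infty(K): \mathrm{supp}(f)\text{ is a first category set in }K\}$; $m_0(K)=\ell_\infty(K)/m(K)$ with the quotient norm, a real commutative $C^*$-algebra. $Q_K$ denotes the set of nonzero real algebra homomorphisms $m_0(K)\to\mathbb R$, with the weak$^*$ topology, so that $m_0(K)\cong C(Q_K)$. For an ultrafilter $\mathfrak U$ on $K$ containing no first category set, $\lim\mathfrak U$ is the point of $K$ to which $\mathfrak U$ converges, and $\mathfrak U\text{-}\lim\in Q_K$ is the homomorphism $[f]\mapsto\lim_{\mathfrak U}f$; every element of $Q_K$ is of this form. *)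

(* Defs.v *)
From HB Require Import structures.
From mathcomp Require Import all_boot all_order all_algebra.
From mathcomp Require Import all_classical all_reals all_analysis.
Set Implicit Arguments. Unset Strict Implicit. Unset Printing Implicit Defensive.
Import Order.TTheory GRing.Theory Num.Theory.
Import numFieldNormedType.Exports.
Local Open Scope classical_set_scope.
Local Open Scope ring_scope.

Definition nowhere_dense {K : topologicalType} (A : set K) : Prop :=
  interior (closure A) = set0.

Definition first_category {K : topologicalType} (A : set K) : Prop :=
  exists N : nat -> set K, (forall n, nowhere_dense (N n)) /\
    A `<=` \bigcup_n N n.

Definition bounded_fun {K : Type} {R : realType} (f : K -> R) : Prop :=
  exists M : R, forall x, `|f x| <= M.

Definition supp {K : Type} {R : realType} (f : K -> R) : set K :=
  [set x | f x != 0].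

Definition in_mK {K : topologicalType} {R : realType} (f : K -> R) : Prop :=
  bounded_fun f /\ first_category (supp f).

(* Elements of Q_K: nonzero real algebra homomorphisms m_0(K) -> R, represented
   (via the universal property of the quotient l_infty(K)/m(K)) as real algebra
   homomorphisms l_infty(K) -> R vanishing on m(K).  Only the values on bounded
   functions matter. *)
Definition in_QK {K : topologicalType} {R : realType} (phi : (K -> R) -> R) : Prop :=
  [/\ forall f g, bounded_fun f -> bounded_fun g -> phi (f \+ g) = phi f + phi g,
      forall (c : R) f, bounded_fun f -> phi (fun x => c * f x) = c * phi f,
      forall f g, bounded_fun f -> bounded_fun g -> phi (f \* g) = phi f * phi g,
      forall f, in_mK f -> phi f = 0
    & exists f, bounded_fun f /\ phi f != 0].

(* U is open in Q_K for the weak* topology (the topology of pointwise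
   convergence on m_0(K), i.e. generated by the evaluations at classes [f],
   f bounded): every point of U has a basic weak* neighbourhood inside U. *)
Definition weakstar_open_QK {K : topologicalType} {R : realType}
  (U : set ((K -> R) -> R)) : Prop :=
  U `<=` in_QK /\
  forall phi, U phi ->
    exists (s : seq (K -> R)) (e : R), 0 < e /\ (forall f, f \in s -> bounded_fun f) /\
      forall psi, in_QK psi ->
        (forall f, f \in s -> `|psi f - phi f| < e) -> U psi.

Definition ulim {K : topologicalType} {R : realType} (F : set_system K) :
  (K -> R) -> R := fun f => lim (f @ F).

(* Main.v *)
Require Import Defs.
From HB Require Import structures.
From mathcomp Require Import all_boot all_order all_algebra.
From mathcomp Require Import all_classical all_reals all_analysis.
Import Order.TTheory GRing.Theory Num.Theory.
Import numFieldNormedType.Exports.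
Local Open Scope classical_set_scope.
Local Open Scope ring_scope.
Lemma fc_sub (K : topologicalType) (A B : set K) :
  A `<=` B -> first_category B -> first_category A.
Proof. by move=> AB [N [NN BN]]; exists N; split => // x /AB /BN. Qed.

Lemma fc_setU (K : topologicalType) (A B : set K) :
  first_category A -> first_category B -> first_category (A `|` B).
Proof.
move=> [N1 [H1 A1]] [N2 [H2 B2]].
exists (fun n => if odd n then N1 n./2 else N2 n./2); split.
  by move=> n; case: (odd n).
move=> x [/A1 [m _ Hm]|/B2 [m _ Hm]].
  by exists m.*2.+1 => //=; rewrite odd_double /= uphalf_double.
by exists m.*2 => //=; rewrite odd_double half_double.
Qed.

Lemma nd_compl_dense (K : topologicalType) (G : set K) :
  open G -> closure G = setT -> nowhere_dense (~` G).
Proof.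
move=> oG dG; rewrite /nowhere_dense.
have cG : closed (~` G) by exact: open_closedC.
rewrite -(closure_id (~` G)).1 //.
apply/seteqP; split => // x Hx.
have : closure G x by rewrite dG.
move=> /(_ _ Hx) [y [Gy nGy]]; exact: nGy.
Qed.
Lemma banach (K : topologicalType) (A : set K) : ~ first_category A ->
  exists V : set K, open V /\ V !=set0 /\
    forall W, open W -> W `<=` V -> W !=set0 -> ~ first_category (A `&` W).
Proof.
move=> nA; apply: contrapT => H.
have H' : forall V : set K, open V -> V !=set0 -> exists W : set K,
    [/\ open W, W `<=` V, W !=set0 & first_category (A `&` W)].
  move=> V oV nV; apply: contrapT => nW; apply: H; exists V; split => //; split => //.
  by move=> W oW WV nW0 fW; apply: nW; exists W.
apply: nA.
pose P (fam : set (set K)) :=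
  (forall W, fam W -> [/\ open W, W !=set0 & first_category (A `&` W)]) /\
  (forall W1 W2, fam W1 -> fam W2 -> W1 `&` W2 !=set0 -> W1 = W2).
have [fam [[Pf1 Pf2] maxf]] : exists fam, P fam /\ forall B, fam `<` B -> ~ P B.
  apply: Zorn_bigcup => F FP Ftot; split.
    by move=> W [X FX XW]; exact: (FP _ FX).1.
  move=> W1 W2 [X1 FX1 X1W] [X2 FX2 X2W].
  have [X12|X21] := Ftot _ _ FX1 FX2.
    by apply: (FP _ FX2).2 => //; exact: X12.
  by apply: (FP _ FX1).2 => //; exact: X21.
pose G' := \bigcup_(W in fam) W.
have oG : open G' by apply: bigcup_open => W /Pf1 [].
have dG : closure G' = setT.
  apply/seteqP; split => // x _; apply: contrapT => nx.
  pose V := ~` closure G'.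
  have oV : open V by apply: closed_openC; exact: closed_closure.
  have [W [oW WV nW fW]] := H' V oV (ex_intro _ x nx).
  have WG : forall z, W z -> ~ G' z.
    by move=> z /WV Vz Gz; apply: Vz; exact: subset_closure.
  apply: (maxf (fam `|` [set W])).
    rewrite properEneq; split; last by move=> ? ?; left.
    apply/eqP => E; have : (fam `|` [set W]) W by right.
    rewrite -E => fW'; have [z Wz] := nW; apply: (WG z Wz); exists W => //.
  split.
    move=> W0 /= [f0|E]; first exact: Pf1.
    by rewrite E; split.
  move=> W1 W2 /= [f1|E1] [f2|E2]; rewrite ?E1 ?E2 //.
  - exact: Pf2.
  - by move=> [z [W1z Wz]]; exfalso; apply: (WG z Wz); exists W1.
  - by move=> [z [Wz W2z]]; exfalso; apply: (WG z Wz); exists W2.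
have : forall W, exists N : nat -> set K, fam W ->
    (forall n, nowhere_dense (N n)) /\ A `&` W `<=` \bigcup_n N n.
  move=> W; have [fW|nfW] := pselect (fam W); last first.
    by exists (fun _ => set0).
  have [_ _ [N [HN1 HN2]]] := Pf1 _ fW; by exists N.
move=> /choice [NN HNN].
pose M n := \bigcup_(W in fam) (NN W n `&` W).
have ndM : forall n, nowhere_dense (M n).
  move=> n; rewrite /nowhere_dense; apply/seteqP; split => // x.
  rewrite /interior /= nbhsE; move=> [Op [oO Ox] OM].
  have : closure G' x by rewrite dG.
  move=> /(_ Op (open_nbhs_nbhs (conj oO Ox))) [y [[W0 fW0 W0y] Oy]].
  have [oW0 _ _] := Pf1 _ fW0.
  have sub : Op `&` W0 `<=` closure (NN W0 n).
    move=> z [Oz W0z] B Bz.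
    have BW : nbhs z (B `&` W0).
      apply: filterI Bz _; apply: open_nbhs_nbhs; split => //; exact: oW0.
    have [t [[W fW [Nt Wt]] [Bt W0t]]] := OM z Oz _ BW.
    have EW : W = W0 by apply: Pf2 => //; exists t.
    by exists t; split => //; rewrite -EW.
  have := (HNN W0 fW0).1 n; rewrite /nowhere_dense => E.
  have : interior (closure (NN W0 n)) y.
    rewrite /interior nbhsE; exists (Op `&` W0) => //; split => //.
    by apply: openI => //; exact: oW0.
  by rewrite E.
exists (fun n => if n is m.+1 then M m else ~` G'); split.
  by case => [|m] //; exact: nd_compl_dense.
move=> x Ax; have [Gx|nGx] := pselect (G' x); last by exists 0%N.
case: Gx => W fW Wx.
have [m _ Hm] := (HNN W fW).2 x (conj Ax Wx).
by exists m.+1 => //; exists W.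
Qed.
Section Bnd.
Context {K : Type} {R : realType}.
Implicit Types (f g : K -> R).

Lemma bnd_cst (c : R) : Defs.bounded_fun (fun _ : K => c).
Proof. by rewrite /Defs.bounded_fun; exists `|c| => x. Qed.

Lemma bnd_add {f g} : Defs.bounded_fun f -> Defs.bounded_fun g -> Defs.bounded_fun (f \+ g).
Proof.
rewrite /Defs.bounded_fun; move=> [M HM] [N HN]; exists (M + N) => x /=.
by rewrite (le_trans (ler_normD _ _)) // lerD.
Qed.

Lemma bnd_mul {f g} : Defs.bounded_fun f -> Defs.bounded_fun g -> Defs.bounded_fun (f \* g).
Proof.
rewrite /Defs.bounded_fun; move=> [M HM] [N HN]; exists (M * N) => x /=.
by rewrite normrM ler_pM.
Qed.

Lemma bnd_scal (c : R) {f} : Defs.bounded_fun f -> Defs.bounded_fun (fun x => c * f x).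
Proof.
rewrite /Defs.bounded_fun; move=> [M HM]; exists (`|c| * M) => x /=.
by rewrite normrM ler_wpM2l.
Qed.

Lemma bnd_ind (B : set K) : Defs.bounded_fun (\1_B : K -> R).
Proof.
rewrite /Defs.bounded_fun; exists 1 => x; rewrite indicE; by case: (x \in B); rewrite ?normr1 ?normr0.
Qed.

Lemma bnd_subc {f} (c : R) : Defs.bounded_fun f -> Defs.bounded_fun (fun x => f x - c).
Proof.
rewrite /Defs.bounded_fun; move=> [M HM]; exists (M + `|c|) => x.
by rewrite (le_trans (ler_normB _ _)) // lerD.
Qed.
End Bnd.
Section Phi.
Context {K : topologicalType} {R : realType} (phi : (K -> R) -> R)
  (Hphi : Defs.in_QK phi).

Let padd {f g} : Defs.bounded_fun f -> Defs.bounded_fun g -> phi (f \+ g) = phi f + phi g.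
Proof. by move: Hphi; rewrite /Defs.in_QK => -[H _ _ _ _]; apply: H. Qed.
Let pscal (c : R) {f} : Defs.bounded_fun f -> phi (fun x => c * f x) = c * phi f.
Proof. by move: Hphi; rewrite /Defs.in_QK => -[_ H _ _ _]; apply: H. Qed.
Let pmul {f g} : Defs.bounded_fun f -> Defs.bounded_fun g -> phi (f \* g) = phi f * phi g.
Proof. by move: Hphi; rewrite /Defs.in_QK => -[_ _ H _ _]; apply: H. Qed.
Let pvan {f} : Defs.in_mK f -> phi f = 0.
Proof. by move: Hphi; rewrite /Defs.in_QK => -[_ _ _ H _]; apply: H. Qed.

Lemma phi1 : phi (fun _ => 1) = 1.
Proof.
move: Hphi; rewrite /Defs.in_QK => -[_ _ _ _ [f [bf nf]]].
have := pmul (bnd_cst 1) bf.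
have -> : ((fun _ : K => (1:R)) \* f) = f by apply/funext => x /=; rewrite mul1r.
move/eqP; rewrite -subr_eq0 -{1}[phi f]mul1r -mulrBl mulf_eq0 (negbTE nf) orbF.
by rewrite subr_eq0 => /eqP <-.
Qed.

Lemma phic (c : R) : phi (fun _ => c) = c.
Proof.
have E := pscal c (bnd_cst 1).
have -> : (fun _ : K => c) = (fun x : K => c * (fun _ : K => (1:R)) x).
  by apply/funext => x; rewrite mulr1.
by rewrite E phi1 mulr1.
Qed.

Lemma phisub f (c : R) : Defs.bounded_fun f -> phi (fun x => f x - c) = phi f - c.
Proof.
move=> bf; have := padd bf (bnd_cst (- c)); rewrite phic => <-.
by [].
Qed.

Lemma phipos g : Defs.bounded_fun g -> (forall x, 0 <= g x) -> 0 <= phi g.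
Proof.
move=> bg g0; pose h := fun x => Num.sqrt (g x).
have bh : Defs.bounded_fun h.
  case: bg => M HM; exists (Num.sqrt M) => x.
  rewrite /h ger0_norm ?sqrtr_ge0 //; apply: ler_wsqrtr.
  by have := HM x; rewrite ger0_norm.
have -> : g = h \* h.
  by apply/funext => x; change (g x = h x * h x); rewrite /h -expr2 sqr_sqrtr.
by rewrite pmul // -expr2 sqr_ge0.
Qed.

Definition large (B : set K) := phi (\1_B) = 1.

Lemma largeT : large setT.
Proof.
rewrite /large -phi1; congr phi; apply/funext => x; by rewrite indicE in_setT.
Qed.

Lemma largeI B C : large B -> large C -> large (B `&` C).
Proof.
by rewrite /large indicI (pmul (bnd_ind B) (bnd_ind C)) => -> ->; rewrite mulr1.
Qed.

Lemma large_nfc B : large B -> ~ Defs.first_category B.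
Proof.
rewrite /large => LB fB.
have : phi (\1_B) = 0.
  apply: pvan; split; first exact: bnd_ind.
  apply: fc_sub fB => x; rewrite /Defs.supp /= indicE.
  by case: (boolP (x \in B)) => [/set_mem //|_]; rewrite eqxx.
by rewrite LB => /eqP; rewrite oner_eq0.
Qed.

Lemma large_near f (d : R) : Defs.bounded_fun f -> 0 < d ->
  large [set x | `|f x - phi f| < d].
Proof.
move=> bf d0; set A := [set x | _].
pose C := ~` A; pose p := phi (\1_C).
have bs := bnd_subc (phi f) bf.
have pp : p * p = p.
  by rewrite /p -(pmul (bnd_ind C) (bnd_ind C)) -indicI setIid.
have g0 : 0 <= phi (fun x => ((f x - phi f) * (f x - phi f)) * \1_C x
                 + (- d ^+ 2) * \1_C x).
  apply: phipos.
    apply: bnd_add; [apply: bnd_mul; [apply: bnd_mul|]|apply: bnd_scal] => //;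
      exact: bnd_ind.
  move=> x; rewrite indicE; case: (boolP (x \in C)) => [/set_mem|] Cx.
    rewrite !mulr1 subr_ge0 -expr2 -[(f x - phi f) ^+ 2]real_normK ?num_real //.
    rewrite lerXn2r ?nnegrE ?normr_ge0 ?(ltW d0) //.
    by rewrite leNgt; apply/negP => H; apply: Cx.
  by rewrite !mulr0 addr0.
have bfm : Defs.bounded_fun (fun x => (f x - phi f) * (f x - phi f) * \1_C x).
  by apply: bnd_mul; [apply: bnd_mul|exact: bnd_ind].
move: g0; rewrite (padd bfm (bnd_scal _ (bnd_ind C))) (pscal _ (bnd_ind C)).
rewrite (pmul (bnd_mul bs bs) (bnd_ind C)) (pmul bs bs) phisub // subrr !mul0r add0r.
rewrite -/p => H.
have p0 : p = 0.
  have : p * (p - 1) = 0 by rewrite mulrBr mulr1 pp subrr.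
  move/eqP; rewrite mulf_eq0 => /orP[/eqP //|]; rewrite subr_eq0 => /eqP p1.
  exfalso; move: H; rewrite p1 mulr1 oppr_ge0 leNgt => /negP; apply.
  by rewrite exprn_gt0.
rewrite /large.
have : phi (\1_A \+ \1_C) = 1.
  rewrite -phi1; congr phi; apply/funext => x /=; rewrite !indicE.
  case: (boolP (x \in A)) => xA; case: (boolP (x \in C)) => xC //.
  - by exfalso; move: xC; rewrite /C in_setC xA.
  - by rewrite addr0.
  - by rewrite add0r.
  - by exfalso; move: xC; rewrite /C in_setC xA.
by rewrite (padd (bnd_ind A) (bnd_ind C)) -/p p0 addr0.
Qed.

Lemma large_seq (s : seq (K -> R)) (d : R) : 0 < d ->
  (forall f, f \in s -> Defs.bounded_fun f) ->
  large [set x | forall f, f \in s -> `|f x - phi f| < d].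
Proof.
move=> d0; elim: s => [|f s IH] bs.
  have -> : [set x | forall f, f \in [::] -> `|f x - phi f| < d] = setT.
    by apply/seteqP; split => // x _ f.
  exact: largeT.
have -> : [set x | forall g, g \in f :: s -> `|g x - phi g| < d] =
   [set x | `|f x - phi f| < d] `&` [set x | forall g, g \in s -> `|g x - phi g| < d].
  apply/seteqP; split => x /=.
    by move=> H; split; [apply: H; rewrite mem_head|move=> g gs; apply: H; rewrite in_cons gs orbT].
  by move=> [H1 H2] g; rewrite in_cons => /orP[/eqP ->|/H2].
apply: largeI.
  by apply: large_near => //; apply: bs; rewrite mem_head.
by apply: IH => g gs; apply: bs; rewrite in_cons gs orbT.
Qed.

End Phi.
Section Ulim.
Context {K : topologicalType} {R : realType} (G : set_system K)
  (GU : UltraFilter G) (noFC : forall A, G A -> ~ Defs.first_category A).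

Lemma R_haus : hausdorff_space R.
Proof. exact: _. Qed.

Lemma ulim_cvg {f : K -> R} : Defs.bounded_fun f -> f @ G --> (ulim G f : R).
Proof.
move=> bf.
suff [l Hl] : exists l : R, f @ G --> l.
  by rewrite /ulim (cvg_lim R_haus Hl).
case: bf => M HM.
have FM : (f @ G) `[-M, M]%classic.
  rewrite /fmap /=; apply: filterS (@filterT _ G _) => x _ /=.
  by rewrite in_itv /= -ler_norml HM.
have [l [_ cl]] := segment_compact _ FM.
exists l => B Bl.
have [//|nB] := in_ultra_setVsetC (f @^-1` B) GU.
by have [y [nBy By]] := cl (~` B) B nB Bl.
Qed.

Lemma ulim_QK : Defs.in_QK (ulim G : (K -> R) -> R).
Proof.
split.
- move=> f g bf bg; apply: (cvg_lim R_haus).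
  exact: (cvgD (ulim_cvg bf) (ulim_cvg bg)).
- move=> c f bf; apply: (cvg_lim R_haus).
  exact: (cvgM (cvg_cst c) (ulim_cvg bf)).
- move=> f g bf bg; apply: (cvg_lim R_haus).
  exact: (cvgM (ulim_cvg bf) (ulim_cvg bg)).
- move=> f [bf fs]; apply: (cvg_lim R_haus); apply: cvg_near_cst.
  have [Gs|Gns] := in_ultra_setVsetC (Defs.supp f) GU.
    by exfalso; exact: noFC Gs fs.
  apply: filterS Gns => x /= nx; apply: contrapT => fx0; apply: nx.
  by rewrite /Defs.supp /=; apply/eqP.
- exists (fun _ => 1); split; first exact: bnd_cst.
  by rewrite /ulim (cvg_lim R_haus (cvg_cst (1:R))) oner_eq0.
Qed.

Lemma ulim_near (f : K -> R) (c d : R) (A : set K) : Defs.bounded_fun f ->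
  G A -> (forall x, A x -> `|f x - c| < d) -> `|ulim G f - c| < d + d.
Proof.
move=> bf GA Ad.
have d0 : 0 < d.
  have [x Ax] := filter_ex GA.
  exact: le_lt_trans (normr_ge0 _) (Ad x Ax).
have Hn : \forall t \near G, `|ulim G f - f t| < d.
  by move: (ulim_cvg bf) => /cvgrPdist_lt; apply.
have [t [At Ht]] := filter_ex (filterI GA Hn).
rewrite (le_lt_trans (ler_distD (f t) _ _)) // ltrD //.
exact: Ad.
Qed.

End Ulim.
Lemma fc_set0 (K : topologicalType) : Defs.first_category (@set0 K).
Proof.
exists (fun _ => set0); split => // n; rewrite /nowhere_dense.
apply/seteqP; split => // x /interior_subset cx.
by have [y [[] _]] := cx setT filterT.
Qed.

Theorem mainTheorem7 (R : realType) (K : topologicalType)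
  (Kcomp : compact [set: K]) (Khaus : hausdorff_space K)
  (Knoiso : forall x : K, ~ open [set x])
  (U : set ((K -> R) -> R)) (Uopen : weakstar_open_QK U) (Une : U !=set0) :
  exists V : set K, open V /\ V !=set0 /\
    forall v, V v ->
      exists Uv : set_system K,
        [/\ UltraFilter Uv,
            (forall A, Uv A -> ~ first_category A),
            Uv --> v
          & U (ulim Uv)].
Proof.
have [phi Uphi] := Une.
have [UQ Uo] := Uopen.
have [s [e [e0 [bs Hs]]]] := Uo phi Uphi.
have phiQ := UQ phi Uphi.
have e20 : 0 < e / 2 by rewrite divr_gt0.
pose A := [set x | forall f, f \in s -> `|f x - phi f| < e / 2].
have LA : large phi A := @large_seq _ _ phi phiQ s _ e20 bs.
have nA := @large_nfc _ _ phi phiQ _ LA.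
have [V [oV [nV HV]]] := @banach K A nA.
exists V; split => //; split => // v Vv.
pose F0 := [set B | exists W M, [/\ nbhs v W, Defs.first_category M &
   (A `&` W) `\` M `<=` B]].
have F0P : ProperFilter F0.
  apply: Build_ProperFilter_ex.
    move=> B [W [M [nW fM sub]]]; apply: contrapT => nB.
    move: nW; rewrite nbhsE => -[Wp [oWp Wpv] WpW].
    apply: (HV (Wp `&` V)).
    - exact: openI.
    - by move=> x [].
    - by exists v.
    apply: fc_sub fM => x [Ax [Wpx Vx]]; apply: contrapT => nMx.
    by apply: nB; exists x; apply: sub; split => //; split => //; apply: WpW.
  split.
  - exists setT, set0; split => //; [exact: filterT|exact: fc_set0].
  - move=> B C [W1 [M1 [n1 f1 s1]]] [W2 [M2 [n2 f2 s2]]].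
    exists (W1 `&` W2), (M1 `|` M2); split.
    + exact: filterI.
    + exact: fc_setU.
    + move=> x [[Ax [W1x W2x]] nM]; split.
        by apply: s1; split => //; move=> M1x; apply: nM; left.
      by apply: s2; split => //; move=> M2x; apply: nM; right.
  - move=> B C BC [W [M [nW fM sub]]]; exists W, M; split => //.
    exact: subset_trans BC.
have [Ug [GU FG]] := ultraFilterLemma F0P.
have noFC : forall B, Ug B -> ~ Defs.first_category B.
  move=> B UB fB.
  have UBc : Ug (~` B).
    apply: FG; exists setT, B; split => //; first exact: filterT.
  have [x [Bx nBx]] := filter_ex (filterI UB UBc).
  exact: nBx.
have GA : Ug A.
  apply: FG; exists setT, set0; split => //; [exact: filterT|exact: fc_set0|].
  by move=> x [[Ax _] _].
exists Ug; split => //.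
- move=> B nB; apply: FG; exists B, set0; split => //; first exact: fc_set0.
  by move=> x [[_ Bx] _].
- apply: Hs; first exact: (@ulim_QK K R Ug GU noFC).
  move=> f fs.
  rewrite [e in _ < e](splitr e).
  apply: (@ulim_near K R Ug GU f (phi f) (e/2) A (bs f fs) GA).
  by move=> x Ax; apply: Ax.
Qed.
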